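(* Let $R$ be a ring, $S_0(R)$ the largest element of $\mathrm{Den}(R,0)$ and $Q(R)=S_0(R)^{-1}R=RS_0(R)^{-1}$ with group of units $Q(R)^*$. Then: (1) $S_0(Q(R))=Q(R)^*$ and $S_0(Q(R))\cap R=S_0(R)$; (2) $Q(R)^*$ is generated by $S_0(R)$ and $\{s^{-1}\mid s\in S_0(R)\}$; (3) $Q(R)^*=\{s^{-1}t\mid s,t\in S_0(R)\}=\{ts^{-1}\mid s,t\in S_0(R)\}$; (4) $Q(Q(R))=Q(R)$.
   Context: Rings are associative with $1$. A multiplicatively closed subset $S$ ($1\in S$, $0\notin S$) is a left (resp. right) Ore set if $Sr\cap Rs\ne\emptyset$ (resp. $rS\cap sR\ne\emptyset$) for all $r,s$ with $s\in S$; it is a left denominator set if it is left Ore and $rs=0$ ($s\in S$) implies $tr=0$ for some $t\in S$; right denominator sets are defined symmetrically. $\mathrm{Den}(R,0)$ is the set of subsets which are both left and right denominator sets and consist of regular elements; it has a largest element $S_0(R)$, and $Q(R):=S_0(R)^{-1}R\cong RS_0(R)^{-1}$ is the largest quotient ring of $R$, containing $R$. The same constructions apply to any ring, e.g. $Q(R)$. *)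

(* Defs.v *)
From HB Require Import structures.
From mathcomp Require Import all_boot all_order all_algebra.
Set Implicit Arguments. Unset Strict Implicit. Unset Printing Implicit Defensive.
Import GRing.Theory.
Local Open Scope ring_scope.

Section Den.
Variable R : nzRingType.

Definition mult_closed_set (S : R -> Prop) : Prop :=
  S 1 /\ ~ S 0 /\ (forall x y, S x -> S y -> S (x * y)).

Definition left_ore (S : R -> Prop) : Prop :=
  forall r s, S s -> exists s' r', S s' /\ s' * r = r' * s.

Definition right_ore (S : R -> Prop) : Prop :=
  forall r s, S s -> exists s' r', S s' /\ r * s' = s * r'.

Definition left_den (S : R -> Prop) : Prop :=
  mult_closed_set S /\ left_ore S /\
  (forall r s, S s -> r * s = 0 -> exists t, S t /\ t * r = 0).

Definition right_den (S : R -> Prop) : Prop :=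
  mult_closed_set S /\ right_ore S /\
  (forall r s, S s -> s * r = 0 -> exists t, S t /\ r * t = 0).

Definition regular (x : R) : Prop :=
  forall y, (x * y = 0 -> y = 0) /\ (y * x = 0 -> y = 0).

Definition Den0 (S : R -> Prop) : Prop :=
  left_den S /\ right_den S /\ (forall x, S x -> regular x).

(* S_0(R): the largest element of Den(R,0), i.e. the union of all its
   elements (the paper shows this union belongs to Den(R,0)). *)
Definition S0 : R -> Prop := fun x => exists S, Den0 S /\ S x.

Definition is_inv (x u : R) : Prop := x * u = 1 /\ u * x = 1.
Definition is_unit (x : R) : Prop := exists u, is_inv x u.

Inductive gen_group (A : R -> Prop) : R -> Prop :=
| gg_in x : A x -> gen_group A x
| gg_one : gen_group A 1
| gg_mul x y : gen_group A x -> gen_group A y -> gen_group A (x * y)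
| gg_inv x y : gen_group A x -> is_inv x y -> gen_group A y.

End Den.

(* [f : R -> Q] presents Q as the (left and right) quotient ring
   S^{-1}R = RS^{-1} of R at S (standard characterization, unique up to
   isomorphism): images of S are units, every element is f(s)^{-1} f(r)
   and also f(r) f(s)^{-1}, and the kernel is the S-torsion. *)
Definition is_left_quotient (R Q : nzRingType) (S : R -> Prop)
  (f : {rmorphism R -> Q}) : Prop :=
  (forall s, S s -> is_unit (f s)) /\
  (forall q, exists s r u, S s /\ is_inv (f s) u /\ q = u * f r) /\
  (forall r, f r = 0 <-> exists s, S s /\ s * r = 0).

Definition is_right_quotient (R Q : nzRingType) (S : R -> Prop)
  (f : {rmorphism R -> Q}) : Prop :=
  (forall s, S s -> is_unit (f s)) /\
  (forall q, exists s r u, S s /\ is_inv (f s) u /\ q = f r * u) /\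
  (forall r, f r = 0 <-> exists s, S s /\ r * s = 0).

Definition is_quotient (R Q : nzRingType) (S : R -> Prop)
  (f : {rmorphism R -> Q}) : Prop :=
  is_left_quotient S f /\ is_right_quotient S f.

(* Main.v *)
Require Import Defs.
From HB Require Import structures.
From mathcomp Require Import all_boot all_order all_algebra.
From Stdlib Require Import ClassicalEpsilon.
Import GRing.Theory.
Local Open Scope ring_scope.

Section Aux.
Variable Q : nzRingType.

Lemma inv_regular (x u : Q) : is_inv x u -> regular x.
Proof.
move=> [xu ux] y; split=> H.
- by rewrite -[y]mul1r -ux -mulrA H mulr0.
- by rewrite -[y]mulr1 -xu mulrA H mul0r.
Qed.

Lemma unit_regular (x : Q) : is_unit x -> regular x.
Proof. by case=> u /inv_regular. Qed.

Lemma regular_neq0 (x : Q) : regular x -> x <> 0.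
Proof.
move=> H x0; have := (H 1).1; rewrite x0 mul0r => /(_ erefl) /eqP.
by rewrite oner_eq0.
Qed.

Lemma regularM (x y : Q) : regular x -> regular y -> regular (x * y).
Proof.
move=> Hx Hy z; split=> H.
- apply: (Hy z).1; apply: (Hx (y*z)).1; by rewrite mulrA.
- apply: (Hx z).2; apply: (Hy (z*x)).2; by rewrite -mulrA.
Qed.

Lemma is_unit1 : is_unit (1 : Q).
Proof. by exists 1; rewrite /is_inv mulr1. Qed.

Lemma is_unitM (x y : Q) : is_unit x -> is_unit y -> is_unit (x * y).
Proof.
case=> u [xu ux] [v [yv vy]]; exists (v * u); split.
- by rewrite mulrA -(mulrA x) yv mulr1 xu.
- by rewrite mulrA -(mulrA v) ux mulr1 vy.
Qed.

Lemma is_inv_sym (x u : Q) : is_inv x u -> is_inv u x.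
Proof. by move=> [a b]; split. Qed.

Lemma units_Den0 : Den0 (@is_unit Q).
Proof.
have mc : mult_closed_set (@is_unit Q).
  split; first exact: is_unit1.
  split; last exact: is_unitM.
  by move=> /unit_regular /regular_neq0.
split; [split; [exact: mc|split]|split; [split; [exact: mc|split]| exact: unit_regular]].
- move=> r s [u [su us]]; exists 1, (r * u); split; first exact: is_unit1.
  by rewrite mul1r -mulrA us mulr1.
- move=> r s /unit_regular Hs H; exists 1; split; first exact: is_unit1.
  by rewrite mul1r; apply: (Hs r).2.
- move=> r s [u [su us]]; exists 1, (u * r); split; first exact: is_unit1.
  by rewrite mulr1 mulrA su mul1r.
- move=> r s /unit_regular Hs H; exists 1; split; first exact: is_unit1.
  by rewrite mulr1; apply: (Hs r).1.
Qed.

Lemma unit_S0 (q : Q) : is_unit q -> S0 q.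
Proof. by move=> Hq; exists (@is_unit Q); split=> //; exact: units_Den0. Qed.

Inductive genU (T : Q -> Prop) : Q -> Prop :=
| gT x : T x -> genU T x
| gU x : is_unit x -> genU T x
| gM x y : genU T x -> genU T y -> genU T (x * y).

Lemma genU_Den0 T : Den0 T -> Den0 (genU T).
Proof.
move=> [[_ [loT _]] [[_ [roT _]] regT]].
have reg : forall x, genU T x -> regular x.
  by move=> x; elim=> [y /regT|y /unit_regular|y z _ Hx _ Hy] //; exact: regularM.
have mc : mult_closed_set (genU T).
  split; first by apply: gU; exact: is_unit1.
  split; last by move=> x y; exact: gM.
  by move=> /reg /regular_neq0.
split; [split; [exact: mc|split]|split; [split; [exact: mc|split]| exact: reg]].
- move=> r s Hs; elim: Hs r => [x Tx|x Ux|x y _ IHx _ IHy] r.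
  + have [s' [r' [Ts' E]]] := loT r x Tx.
    by exists s', r'; split; [apply: gT|].
  + case: Ux => u [xu ux]; exists 1, (r * u); split; first by apply: gU; exact: is_unit1.
    by rewrite mul1r -mulrA ux mulr1.
  + have [s1 [r1 [G1 E1]]] := IHy r.
    have [s2 [r2 [G2 E2]]] := IHx r1.
    exists (s2 * s1), r2; split; first exact: gM.
    by rewrite -mulrA E1 mulrA E2 mulrA.
- move=> r s /reg Hs H; exists 1; split; first by apply: gU; exact: is_unit1.
  by rewrite mul1r; apply: (Hs r).2.
- move=> r s Hs; elim: Hs r => [x Tx|x Ux|x y _ IHx _ IHy] r.
  + have [s' [r' [Ts' E]]] := roT r x Tx.
    by exists s', r'; split; [apply: gT|].
  + case: Ux => u [xu ux]; exists 1, (u * r); split; first by apply: gU; exact: is_unit1.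
    by rewrite mulr1 mulrA xu mul1r.
  + have [s1 [r1 [G1 E1]]] := IHx r.
    have [s2 [r2 [G2 E2]]] := IHy r1.
    exists (s1 * s2), r2; split; first exact: gM.
    by rewrite mulrA E1 -mulrA E2 mulrA.
- move=> r s /reg Hs H; exists 1; split; first by apply: gU; exact: is_unit1.
  by rewrite mulr1; apply: (Hs r).1.
Qed.

End Aux.
Arguments genU {Q} T _.
Arguments gT {Q T} x _.
Arguments gU {Q T} x _.
Arguments gM {Q T} x y _ _.
Arguments genU_Den0 {Q} T _.
Arguments unit_S0 {Q} q _.

Lemma S0_regular {T : nzRingType} {x : T} : S0 x -> regular x.
Proof. by case=> S [[_ [_ H]] Sx]; apply: H. Qed.

Section Main.
Variables (R Q : nzRingType) (f : {rmorphism R -> Q}).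
Hypothesis hQ : is_quotient (@S0 R) f.

Lemma f_inj0 r : f r = 0 -> r = 0.
Proof.
case: hQ => [[_ [_ K]] _] /K [s [Ss E]].
by apply: ((S0_regular Ss) r).1.
Qed.

Lemma f_inj : injective f.
Proof.
move=> x y E; apply/eqP; rewrite -subr_eq0; apply/eqP; apply: f_inj0.
by rewrite rmorphB E subrr.
Qed.

Lemma pullback_Den0 (G : Q -> Prop) : Den0 G ->
  (forall u x, is_unit u -> G x -> G (u * x)) ->
  (forall u x, is_unit u -> G x -> G (x * u)) ->
  Den0 (fun r => G (f r)).
Proof.
move=> [[[G1 [G0 GM]] [loG _]] [[_ [roG _]] regG]] Gl Gr.
case: hQ => [[Fu [Fl _]] [_ [Fr _]]].
have mc : mult_closed_set (fun r => G (f r)).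
  split; first by rewrite /= rmorph1.
  split; first by rewrite /= rmorph0.
  by move=> x y Hx Hy /=; rewrite rmorphM; apply: GM.
have reg : forall r, G (f r) -> regular r.
  move=> r /regG Hr y; split=> H; apply: f_inj0.
  - by apply: (Hr (f y)).1; rewrite -rmorphM H rmorph0.
  - by apply: (Hr (f y)).2; rewrite -rmorphM H rmorph0.
split; [split; [exact: mc|split]|split; [split; [exact: mc|split]| exact: reg]].
- move=> r s Hs.
  have [g [q' [Gg E]]] := loG (f r) (f s) Hs.
  have [s2 [b [u2 [S2 [[e1 e2] Eq]]]]] := Fl q'.
  subst q'.
  have [c [a [u [Sc [[e3 e4] Ea]]]]] := Fl (f s2 * g).
  have Ea' : f a = f c * (f s2 * g) by rewrite Ea mulrA e3 mul1r.
  exists a, (c * b); split => /=.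
  + rewrite Ea'; apply: (Gl); first by apply: (Fu).
    by apply: (Gl) => //; exact: (Fu).
  + apply: f_inj.
    rewrite !rmorphM Ea' -!mulrA; congr (_ * _).
    by rewrite E !mulrA e1 mul1r.
- move=> r s Hs H; exists 1; split; first by rewrite /= rmorph1.
  by rewrite mul1r; apply: (reg s Hs r).2.
- move=> r s Hs.
  have [g [q' [Gg E]]] := roG (f r) (f s) Hs.
  have [s2 [b [u2 [S2 [[e1 e2] Eq]]]]] := Fr q'.
  subst q'.
  have [c [a [u [Sc [[e3 e4] Ea]]]]] := Fr (g * f s2).
  have Ea' : f a = g * f s2 * f c by rewrite Ea -mulrA e4 mulr1.
  exists a, (b * c); split => /=.
  + rewrite Ea'; apply: (Gr); first by apply: (Fu).
    by apply: (Gr) => //; exact: (Fu).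
  + apply: f_inj.
    rewrite !rmorphM Ea' !mulrA; congr (_ * _).
    by rewrite E -!mulrA e2 mulr1.
- move=> r s Hs H; exists 1; split; first by rewrite /= rmorph1.
  by rewrite mulr1; apply: (reg s Hs r).1.
Qed.

Lemma genU_pull T : Den0 T -> Den0 (fun r => genU T (f r)).
Proof.
move=> DT; apply: pullback_Den0; first exact: genU_Den0.
- by move=> u x Hu Hx; apply: gM => //; apply: gU.
- by move=> u x Hu Hx; apply: gM => //; apply: gU.
Qed.

Lemma S0Q_unit (q : Q) : S0 q -> is_unit q.
Proof.
case=> T [DT Tq].
case: hQ => [[Fu [Fl _]] _].
have [s [r [u [Ss [[e1 e2] Eq]]]]] := Fl q.
have Sr : S0 r.
  exists (fun r => genU T (f r)); split; first exact: genU_pull.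
  have -> : f r = f s * q by rewrite Eq mulrA e1 mul1r.
  by apply: gM; [apply: gU; exact: (Fu) | exact: gT].
rewrite Eq; apply: is_unitM; [exists (f s); split => // | exact: (Fu)].
Qed.

Lemma S0R_f r : S0 (f r) <-> S0 r.
Proof.
split.
- case=> T [DT Tq]; exists (fun r => genU T (f r)); split; first exact: genU_pull.
  exact: gT.
- case: hQ => [[Fu _] _] /Fu; exact: unit_S0.
Qed.

End Main.

Theorem theorem4p4 (R Q : nzRingType) (f : {rmorphism R -> Q})
  (hQ : is_quotient (@S0 R) f) :
  (* (1) *)
  ((forall q : Q, @S0 Q q <-> is_unit q) /\
   (forall r : R, @S0 Q (f r) <-> @S0 R r)) /\
  (* (2) *)
  (forall q : Q, is_unit q <->
     gen_group (fun x : Q => exists s, @S0 R s /\ (x = f s \/ is_inv (f s) x)) q) /\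
  (* (3) *)
  (forall q : Q, is_unit q <->
     exists s t u, @S0 R s /\ @S0 R t /\ is_inv (f s) u /\ q = u * f t) /\
  (forall q : Q, is_unit q <->
     exists s t u, @S0 R s /\ @S0 R t /\ is_inv (f s) u /\ q = f t * u) /\
  (* (4) Q(Q(R)) = Q(R): the canonical map Q(R) -> Q(Q(R)) is bijective *)
  (forall (Q' : nzRingType) (g : {rmorphism Q -> Q'}),
     is_quotient (@S0 Q) g -> bijective g).
Proof.
have U1 : forall q : Q, S0 q <-> is_unit q.
  by move=> q; split; [exact: (@S0Q_unit R Q f hQ) | exact: unit_S0].
have U2 := @S0R_f R Q f hQ.
case: (hQ) => [[Fu [Fl _]] [_ [Fr _]]].
have LF : forall q : Q, is_unit q ->
    exists s t u, S0 s /\ S0 t /\ is_inv (f s) u /\ q = u * f t.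
  move=> q Uq; have [s [r [u [Ss [[e1 e2] Eq]]]]] := Fl q.
  exists s, r, u; split=> //; split=> //.
  apply/U2/U1; have -> : f r = f s * q by rewrite Eq mulrA e1 mul1r.
  by apply: is_unitM => //; exact: (Fu).
have RF : forall q : Q, is_unit q ->
    exists s t u, S0 s /\ S0 t /\ is_inv (f s) u /\ q = f t * u.
  move=> q Uq; have [s [r [u [Ss [[e1 e2] Eq]]]]] := Fr q.
  exists s, r, u; split=> //; split=> //.
  apply/U2/U1; have -> : f r = q * f s by rewrite Eq -mulrA e2 mulr1.
  by apply: is_unitM => //; exact: (Fu).
split; first by split.
split.
  move=> q; split.
  - move=> /LF [s [t [u [Ss [St [Hi ->]]]]]].
    apply: gg_mul; apply: gg_in.
    + by exists s; split => //; right.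
    + by exists t; split => //; left.
  - elim=> [x [s [Ss [->|Hi]]]| |x y _ Hx _ Hy|x y _ Hx Hi].
    + exact: (Fu).
    + by exists (f s); apply: is_inv_sym.
    + exact: is_unit1.
    + exact: is_unitM.
    + by exists x; apply: is_inv_sym.
split.
  move=> q; split; first exact: LF.
  move=> [s [t [u [Ss [St [Hi ->]]]]]]; apply: is_unitM; last exact: (Fu).
  by exists (f s); apply: is_inv_sym.
split.
  move=> q; split; first exact: RF.
  move=> [s [t [u [Ss [St [Hi ->]]]]]]; apply: is_unitM; first exact: (Fu).
  by exists (f s); apply: is_inv_sym.
move=> Q' g [[Gu [Gl GK]] _].
have ginj : injective g.
  move=> x y E.
  have : g (x - y) = 0 by rewrite rmorphB E subrr.
  move=> /GK [s [Ss H]].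
  by apply/eqP; rewrite -subr_eq0; apply/eqP; apply: ((S0_regular Ss) _).1.
have gsurj : forall q', {x | g x = q'}.
  move=> q'; apply: constructive_indefinite_description.
  have [s [r [u [Ss [[e1 e2] Eq]]]]] := Gl q'.
  have [v [sv vs]] := @S0Q_unit R Q f hQ _ Ss.
  have guv : g v = u.
    by rewrite -[g v]mul1r -e2 -mulrA -rmorphM sv rmorph1 mulr1.
  by exists (v * r); rewrite rmorphM guv Eq.
exists (fun q' => proj1_sig (gsurj q')).
- by move=> x; apply: ginj; rewrite (proj2_sig (gsurj (g x))).
- by move=> q'; rewrite (proj2_sig (gsurj q')).
Qed.
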